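(* Let $H=(T_1,\dots,T_n,p_1,\dots,p_n)$ be a strategic game with a belief structure satisfying properties A and B. Then: (i) $\overline{GR}^{\alpha}=\overline{LR}^{\alpha}$ for all ordinals $\alpha$; in particular the outcomes of $\overline{GR}$ and $\overline{LR}$ coincide. (ii) The operator $\overline{LR}$ is order independent; indeed, the outcome of every relaxation of $\overline{LR}$ that has an outcome equals the outcome of $\overline{GR}$. (iii) $LR^{\alpha}=\overline{LR}^{\alpha}$ for all ordinals $\alpha$; in particular the outcome of $LR$ exists and equals the outcome of $\overline{LR}$.
   Context: A strategic game $H=(T_1,\dots,T_n,p_1,\dots,p_n)$ has nonempty strategy sets $T_i$ and real payoffs. A restriction is $G=(S_1,\dots,S_n)$ with $S_i\subseteq T_i$ (possibly empty), ordered by componentwise inclusion (a complete lattice with top $H$). A belief structure gives each player $i$ a nonempty belief set $\mathcal B_i$, an expected payoff $p_i:T_i\times\mathcal B_i\to\mathbb R$, and for each restriction $G$ a set $\mathcal B_i\,\dot\cap\,G\subseteq\mathcal B_i$, with $\mathcal B_i\,\dot\cap\,H=\mathcal B_i$. Property A: $G_1\subseteq G_2\subseteq H$ implies $\mathcal B_i\,\dot\cap\,G_1\subseteq\mathcal B_i\,\dot\cap\,G_2$ for all $i$. Best response: for $G=(S_1,\dots,S_n)$, $s_i\in T_i$ is in $BR_G(\mu_i)$ iff $p_i(s_i,\mu_i)\ge p_i(s_i',\mu_i)$ for all $s_i'\in S_i$. Property B: for every $i$ and every $\mu_i\in\mathcal B_i$, $BR_H(\mu_i)\neq\emptyset$.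 Operators: $GR(G):=(S_1',\dots,S_n')$ with $S_i':=\{s_i\in T_i\mid\exists\mu_i\in\mathcal B_i\,\dot\cap\,G:\ s_i\in BR_H(\mu_i)\}$; $LR(G):=(S_1',\dots,S_n')$ with $S_i':=\{s_i\in T_i\mid\exists\mu_i\in\mathcal B_i\,\dot\cap\,G:\ s_i\in BR_G(\mu_i)\}$; $\overline{T}(G):=T(G)\cap G$. Iterations: $T^0:=H$, $T^{\alpha+1}:=T(T^\alpha)$, $T^\beta:=\bigcap_{\alpha<\beta}T^\alpha$ for limit $\beta$; closure ordinal $\alpha_T$ = least $\alpha$ with $T^{\alpha+1}=T^\alpha$, outcome $T^{\alpha_T}$. $R$ is a relaxation of $T$ if for all ordinals $\alpha$: (1) $T(R^\alpha)\subseteq R(R^\alpha)$; (2) if $T(R^\alpha)\subseteq R^\alpha$ then $R(R^\alpha)\subseteq R^\alpha$; (3) if $R(R^\alpha)=R^\alpha$ then $T(R^\alpha)=R^\alpha$. $T$ is order independent if the set of outcomes of relaxations of $T$ has at most one element. *)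

(* Defs.v *)
From Stdlib Require Import Reals.
From mathcomp Require Import ssreflect ssrfun ssrbool eqtype ssrnat fintype.

Set Implicit Arguments.
Unset Strict Implicit.

Record game (n : nat) := Game {
  strat : 'I_n -> Type;
  strat_ne : forall i, inhabited (strat i);
  payoff : 'I_n -> (forall j, strat j) -> R
}.

Definition restriction n (H : game n) := forall i : 'I_n, strat H i -> Prop.

Definition rtop n (H : game n) : restriction H := fun _ _ => True.

Arguments rtop {n} H _ _.

Definition rsub n (H : game n) (G1 G2 : restriction H) : Prop :=
  forall i s, G1 i s -> G2 i s.

Definition rcap n (H : game n) (G1 G2 : restriction H) : restriction H :=
  fun i s => G1 i s /\ G2 i s.

Record belief_structure n (H : game n) := BeliefStructure {
  belief : 'I_n -> Type;
  belief_ne : forall i, inhabited (belief i);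
  exp_payoff : forall i, strat H i -> belief i -> R;
  bcap : forall i, restriction H -> belief i -> Prop;
  bcap_top : forall i (mu : belief i), bcap (rtop H) mu
}.

Arguments belief {n H} b i.
Arguments exp_payoff {n H} b {i} s mu.
Arguments bcap {n H} b {i} G mu.

Definition propertyA n (H : game n) (bs : belief_structure H) : Prop :=
  forall G1 G2 : restriction H, rsub G1 G2 ->
    forall i (mu : belief bs i), bcap bs G1 mu -> bcap bs G2 mu.

Definition BR n (H : game n) (bs : belief_structure H) (G : restriction H)
    (i : 'I_n) (mu : belief bs i) (s : strat H i) : Prop :=
  forall s' : strat H i, G i s' -> (exp_payoff bs s' mu <= exp_payoff bs s mu)%R.

Definition propertyB n (H : game n) (bs : belief_structure H) : Prop :=
  forall i (mu : belief bs i), exists s : strat H i, BR (rtop H) mu s.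

Definition operator n (H : game n) := restriction H -> restriction H.

Definition GR n (H : game n) (bs : belief_structure H) : operator H :=
  fun G i s => exists mu : belief bs i, bcap bs G mu /\ BR (rtop H) mu s.

Definition LR n (H : game n) (bs : belief_structure H) : operator H :=
  fun G i s => exists mu : belief bs i, bcap bs G mu /\ BR G mu s.

Definition obar n (H : game n) (T : operator H) : operator H :=
  fun G => rcap (T G) G.

(** * Ordinals, rendered as elements of well-ordered types.
    Every ordinal alpha is an element of some well-order (e.g. alpha+1), and
    every element of a well-order corresponds to an ordinal (its order type). *)

Record wellorder := WellOrder {
  wo_carrier :> Type;
  wo_lt : wo_carrier -> wo_carrier -> Prop;
  wo_wf : well_founded wo_lt;
  wo_trans : forall x y z, wo_lt x y -> wo_lt y z -> wo_lt x z;
  wo_total : forall x y, wo_lt x y \/ x = y \/ wo_lt y x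
}.

Definition wo_succ (W : wellorder) (v w : W) : Prop :=
  wo_lt v w /\ ~ (exists u, wo_lt v u /\ wo_lt u w).

(** f : W -> restrictions is the transfinite iteration of T along W:
    T^0 = H, T^(a+1) = T(T^a), T^b = intersection of T^a (a<b) for limit b.
    (The zero case is the empty intersection, i.e. H.) *)
Definition is_iteration n (H : game n) (T : operator H) (W : wellorder)
    (f : W -> restriction H) : Prop :=
  forall w : W,
    (forall v, wo_succ v w -> f w = T (f v)) /\
    (~ (exists v, wo_succ v w) ->
       f w = (fun i s => forall v, wo_lt v w -> f v i s)).

(** X is the outcome of T: X = T^{alpha_T}, where alpha_T is the least
    ordinal alpha with T^(alpha+1) = T^alpha. *)
Definition outcome n (H : game n) (T : operator H) (X : restriction H) : Prop :=
  exists (W : wellorder) (f : W -> restriction H) (a a1 : W),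
    is_iteration T f /\ wo_succ a a1 /\ f a1 = f a /\ X = f a /\
    (forall b b1 : W, wo_lt b a -> wo_succ b b1 -> f b1 <> f b).

Definition relaxation n (H : game n) (T R : operator H) : Prop :=
  forall (W : wellorder) (f : W -> restriction H), is_iteration R f ->
    forall w : W,
      rsub (T (f w)) (R (f w)) /\
      (rsub (T (f w)) (f w) -> rsub (R (f w)) (f w)) /\
      (R (f w) = f w -> T (f w) = f w).

Definition order_independent n (H : game n) (T : operator H) : Prop :=
  forall (R1 R2 : operator H) (X1 X2 : restriction H),
    relaxation T R1 -> relaxation T R2 ->
    outcome R1 X1 -> outcome R2 X2 -> X1 = X2.

(* Main.v *)
Require Import Defs.
From Stdlib Require Import Reals Classical FunctionalExtensionality PropExtensionality ProofIrrelevance.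
From mathcomp Require Import ssreflect ssrfun ssrbool eqtype ssrnat fintype.

Set Implicit Arguments.
Unset Strict Implicit.

Lemma rext n (H : game n) (G1 G2 : restriction H) :
  rsub G1 G2 -> rsub G2 G1 -> G1 = G2.
Proof.
  intros h1 h2. apply functional_extensionality_dep; intro i.
  apply functional_extensionality; intro s.
  apply propositional_extensionality; split; [apply h1 | apply h2].
Qed.

Definition Inv n (H : game n) (bs : belief_structure H) (G : restriction H) : Prop :=
  forall i (mu : belief bs i) s, bcap bs G mu -> BR (rtop H) mu s -> G i s.

Definition agree n (H : game n) (bs : belief_structure H) (T : operator H) : Prop :=
  forall G, Inv bs G -> T G = obar (GR bs) G.

Lemma iter_ind (W : wellorder) n (H : game n) (T : operator H) (f : W -> restriction H)
  (P : W -> Prop) : is_iteration T f ->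
  (forall w v, wo_succ v w -> f w = T (f v) -> (forall u, wo_lt u w -> P u) -> P w) ->
  (forall w, ~ (exists v, wo_succ v w) ->
     f w = (fun i s => forall v, wo_lt v w -> f v i s) ->
     (forall u, wo_lt u w -> P u) -> P w) ->
  forall w, P w.
Proof.
  intros hit hs hl w.
  induction w as [w IH] using (well_founded_induction (@wo_wf W)).
  destruct (hit w) as [h1 h2].
  destruct (classic (exists v, wo_succ v w)) as [[v hv]|hn].
  - exact (hs w v hv (h1 v hv) IH).
  - exact (hl w hn (h2 hn) IH).
Qed.

Lemma iter_unique (W : wellorder) n (H : game n) (T : operator H) (f g : W -> restriction H) :
  is_iteration T f -> is_iteration T g -> forall w, f w = g w.
Proof.
  intros hf hg w.
  induction w as [w IH] using (well_founded_induction (@wo_wf W)).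
  destruct (hf w) as [f1 f2]. destruct (hg w) as [g1 g2].
  destruct (classic (exists v, wo_succ v w)) as [[v hv]|hn].
  - rewrite (f1 v hv) (g1 v hv) (IH v (proj1 hv)). reflexivity.
  - rewrite (f2 hn) (g2 hn). apply rext; intros i s hs v hv.
    + rewrite -(IH v hv). exact (hs v hv).
    + rewrite (IH v hv). exact (hs v hv).
Qed.

Lemma GR_mono n (H : game n) (bs : belief_structure H) (hA : propertyA bs) G1 G2 :
  rsub G1 G2 -> rsub (GR bs G1) (GR bs G2).
Proof.
  intros h i s [mu [hm hb]]. exists mu. split; [exact (hA _ _ h i mu hm) | exact hb].
Qed.

Lemma obarGR_mono n (H : game n) (bs : belief_structure H) (hA : propertyA bs) G1 G2 :
  rsub G1 G2 -> rsub (obar (GR bs) G1) (obar (GR bs) G2).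
Proof.
  intros h i s [h1 h2]. split; [exact (GR_mono hA h h1) | exact (h i s h2)].
Qed.

Lemma obar_sub n (H : game n) (T : operator H) G : rsub (obar T G) G.
Proof. intros i s [_ h]; exact h. Qed.

Lemma BR_top n (H : game n) (bs : belief_structure H) G i (mu : belief bs i) s :
  BR (rtop H) mu s -> BR G mu s.
Proof. intros h s' _. apply h. exact I. Qed.

Lemma GR_sub_LR n (H : game n) (bs : belief_structure H) (hA : propertyA bs) G1 G2 :
  rsub G1 G2 -> rsub (GR bs G1) (LR bs G2).
Proof.
  intros h i s [mu [hm hb]]. exists mu. split; [exact (hA _ _ h i mu hm) | exact (BR_top hb)].
Qed.

Lemma Inv_obarGR n (H : game n) (bs : belief_structure H) (hA : propertyA bs) G :
  Inv bs G -> Inv bs (obar (GR bs) G).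
Proof.
  intros hI i mu s hm hb.
  have hm' := hA _ _ (@obar_sub n H (GR bs) G) i mu hm.
  split; [exists mu; split; assumption | exact (hI i mu s hm' hb)].
Qed.

Lemma Inv_LR_GR n (H : game n) (bs : belief_structure H) (hB : propertyB bs) G :
  Inv bs G -> LR bs G = GR bs G.
Proof.
  intros hI. apply rext; intros i s [mu [hm hb]]; exists mu; split; auto.
  - destruct (hB i mu) as [t ht].
    have tG := hI i mu t hm ht.
    intros s' _. eapply Rle_trans; [apply ht; exact I | apply hb; exact tG].
  - exact (BR_top hb).
Qed.

Lemma Inv_GR_sub n (H : game n) (bs : belief_structure H) G :
  Inv bs G -> rsub (GR bs G) G.
Proof. intros hI i s [mu [hm hb]]. exact (hI i mu s hm hb). Qed.

Lemma agree_GR n (H : game n) (bs : belief_structure H) : agree bs (obar (GR bs)).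
Proof. intros G _; reflexivity. Qed.

Lemma agree_obarLR n (H : game n) (bs : belief_structure H) (hB : propertyB bs) :
  agree bs (obar (LR bs)).
Proof. intros G hI. unfold obar. rewrite (Inv_LR_GR hB hI). reflexivity. Qed.

Lemma agree_LR n (H : game n) (bs : belief_structure H) (hB : propertyB bs) :
  agree bs (LR bs).
Proof.
  intros G hI. rewrite (Inv_LR_GR hB hI). apply rext.
  - intros i s h; split; [exact h | exact (Inv_GR_sub hI h)].
  - intros i s [h _]; exact h.
Qed.

Lemma Inv_meet (W : wellorder) n (H : game n) (bs : belief_structure H) (hA : propertyA bs)
  (f : W -> restriction H) w :
  (forall u, wo_lt u w -> Inv bs (f u)) ->
  Inv bs (fun i s => forall v, wo_lt v w -> f v i s).
Proof.
  intros IH i mu s hm hb v hv.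
  apply (IH v hv i mu s); [|exact hb].
  refine (hA _ _ _ i mu hm). intros j t ht. exact (ht v hv).
Qed.

Lemma iter_Inv (W : wellorder) n (H : game n) (bs : belief_structure H) (hA : propertyA bs)
  (T : operator H) (f : W -> restriction H) :
  agree bs T -> is_iteration T f -> forall w, Inv bs (f w).
Proof.
  intros hag hit. apply (iter_ind (P := fun w => Inv bs (f w)) hit).
  - intros w v hv e IH. rewrite e (hag _ (IH v (proj1 hv))).
    exact (Inv_obarGR hA (IH v (proj1 hv))).
  - intros w _ e IH. rewrite e. exact (Inv_meet hA IH).
Qed.

Lemma iter_transfer (W : wellorder) n (H : game n) (bs : belief_structure H) (hA : propertyA bs)
  (T T' : operator H) (f : W -> restriction H) :
  agree bs T -> agree bs T' -> is_iteration T f -> is_iteration T' f.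
Proof.
  intros h1 h2 hit w. have hI := iter_Inv hA h1 hit.
  destruct (hit w) as [a b]. split; [|exact b].
  intros v hv. rewrite (a v hv) (h1 _ (hI v)) (h2 _ (hI v)). reflexivity.
Qed.

Lemma outcome_transfer n (H : game n) (bs : belief_structure H) (hA : propertyA bs)
  (T T' : operator H) X :
  agree bs T -> agree bs T' -> outcome T X -> outcome T' X.
Proof.
  intros h1 h2 [W [f [a [a1 [hit rest]]]]].
  exists W, f, a, a1. split; [exact (iter_transfer hA h1 h2 hit) | exact rest].
Qed.
Unset Strict Implicit.

Definition meetS n (H : game n) (S : restriction H -> Prop) : restriction H :=
  fun i s => forall K, S K -> K i s.

Inductive tower n (H : game n) (T : operator H) : restriction H -> Prop :=
| tw_T K : tower T K -> tower T (T K)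
| tw_meet (S : restriction H -> Prop) : (forall K, S K -> tower T K) -> tower T (meetS S).

Definition defl n (H : game n) (T : operator H) := forall G, rsub (T G) G.

Definition extreme n (H : game n) (T : operator H) (c : restriction H) :=
  forall x, tower T x -> rsub c x -> x <> c -> rsub c (T x).

Lemma rsub_trans n (H : game n) (A B C : restriction H) : rsub A B -> rsub B C -> rsub A C.
Proof. intros h1 h2 i s h; auto. Qed.

Lemma lemma1 n (H : game n) (T : operator H) (hd : defl T) c :
  extreme T c -> forall x, tower T x -> rsub c x \/ rsub x (T c).
Proof.
  intros hc x hx. induction hx as [x' hx' IH | S hS IH].
  - destruct IH as [h|h].
    + destruct (classic (x' = c)) as [e|ne].
      * right. rewrite e. intros i s hs; exact hs.
      * left. exact (hc x' hx' h ne).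
    + right. exact (rsub_trans (hd x') h).
  - destruct (classic (forall K, S K -> rsub c K)) as [hall|hn].
    + left. intros i s hs K hK. exact (hall K hK i s hs).
    + apply not_all_ex_not in hn. destruct hn as [K hK].
      apply imply_to_and in hK. destruct hK as [hK hK'].
      destruct (IH K hK) as [h|h]; [contradiction|].
      right. intros i s hs. exact (h i s (hs K hK)).
Qed.

Lemma lemma2 n (H : game n) (T : operator H) (hd : defl T) c :
  tower T c -> extreme T c.
Proof.
  intros hc. induction hc as [c' hc' IH | S hS IH].
  - intros x hx hsub hne.
    destruct (lemma1 hd IH hx) as [h|h].
    + destruct (classic (x = c')) as [e|ne].
      * rewrite e; intros i s hs; exact hs.
      * exact (rsub_trans (hd c') (IH x hx h ne)).
    + exfalso. apply hne. exact (rext h hsub).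
  - intros x hx hsub hne.
    destruct (classic (forall K, S K -> rsub x (T K))) as [hall|hn].
    + exfalso. apply hne. apply rext; [|exact hsub].
      intros i s hs K hK. exact (hd K i s (hall K hK i s hs)).
    + apply not_all_ex_not in hn. destruct hn as [K hK].
      apply imply_to_and in hK. destruct hK as [hK hK'].
      destruct (lemma1 hd (IH K hK) hx) as [h|h]; [|contradiction].
      destruct (classic (x = K)) as [e|ne].
      * have hm : tower T (meetS S) by constructor; exact hS.
        destruct (lemma1 hd (IH K hK) hm) as [h2|h2].
        -- exfalso. apply hne. apply rext; [|exact hsub].
           rewrite e. exact h2.
        -- rewrite e. exact h2.
      * have := IH K hK x hx h ne. intros h3 i s hs. exact (h3 i s (hs K hK)).
Qed.

Lemma chain n (H : game n) (T : operator H) (hd : defl T) x y :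
  tower T x -> tower T y -> rsub x y \/ rsub y x.
Proof.
  intros hx hy. destruct (lemma1 hd (lemma2 hd hy) hx) as [h|h].
  - right; exact h.
  - left; exact (rsub_trans h (hd y)).
Qed.

Lemma FP n (H : game n) (T : operator H) (hd : defl T) M :
  tower T M -> T M = M -> forall K, tower T K -> rsub K M -> K = M.
Proof.
  intros hM eM K hK. induction hK as [K' hK' IH | S hS IH]; intros hsub.
  - destruct (lemma1 hd (lemma2 hd hK') hM) as [h|h].
    + rewrite (IH h). exact eM.
    + exact (rext hsub h).
  - apply rext; [exact hsub|]. intros i s hs K hK.
    destruct (chain hd (hS K hK) hM) as [h|h].
    + rewrite (IH K hK h). exact hs.
    + exact (h i s hs).
Qed.
Unset Strict Implicit.

Definition twT n (H : game n) (T : operator H) := option {K : restriction H | tower T K}.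

Definition twlt n (H : game n) (T : operator H) (x y : twT T) : Prop :=
  match x, y with
  | Some a, Some b => rsub (proj1_sig b) (proj1_sig a) /\ proj1_sig b <> proj1_sig a
  | Some _, None => True
  | None, _ => False
  end.

Lemma sig_eq n (H : game n) (T : operator H) (a b : {K : restriction H | tower T K}) :
  proj1_sig a = proj1_sig b -> a = b.
Proof. destruct a as [a pa], b as [b pb]; simpl; intro e; subst; f_equal; apply proof_irrelevance. Qed.

Lemma twlt_wf n (H : game n) (T : operator H) (hd : defl T) : well_founded (@twlt n H T).
Proof.
  have hS : forall K, tower T K -> forall p : tower T K, Acc (@twlt n H T) (Some (exist _ K p)).
  { intros K hK. induction hK as [K' hK' IH | S hS IH]; intros p; constructor;
    intros [[z pz]|] hy; simpl in hy; try contradiction; destruct hy as [hy1 hy2].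
    - destruct (lemma1 hd (lemma2 hd hK') pz) as [h|h].
      + destruct (classic (z = K')) as [e|ne].
        * subst z. apply IH.
        * apply (Acc_inv (IH hK')). simpl. split; [exact h | intro e; apply ne; symmetry; exact e].
      + exfalso. apply hy2. exact (rext hy1 h).
    - destruct (classic (forall K, S K -> rsub z K)) as [hall|hn].
      + exfalso. apply hy2. apply rext; [exact hy1|]. intros i s hs K hK. exact (hall K hK i s hs).
      + apply not_all_ex_not in hn. destruct hn as [K hK].
        apply imply_to_and in hK. destruct hK as [hK hK'].
        destruct (chain hd (hS K hK) pz) as [h|h]; [|contradiction].
        apply (Acc_inv (IH K hK (hS K hK))). simpl. split; [exact h|].
        intro e. apply hK'. rewrite e. intros i s q; exact q. }
  intros [[K p]|].
  - apply hS; exact p.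
  - constructor. intros [[z pz]|] hy; [apply hS; exact pz | contradiction].
Qed.

Lemma twlt_trans n (H : game n) (T : operator H) (x y z : twT T) :
  twlt x y -> twlt y z -> twlt x z.
Proof.
  destruct x as [a|], y as [b|], z as [c|]; simpl; try tauto.
  intros [h1 h2] [h3 h4]. split; [exact (rsub_trans h3 h1)|].
  intro e. apply h2. apply rext; [exact h1|]. rewrite -e. exact h3.
Qed.

Lemma twlt_total n (H : game n) (T : operator H) (hd : defl T) (x y : twT T) :
  twlt x y \/ x = y \/ twlt y x.
Proof.
  destruct x as [a|], y as [b|]; simpl; auto.
  destruct (classic (proj1_sig a = proj1_sig b)) as [e|ne].
  - right; left. f_equal. exact (sig_eq e).
  - destruct (chain hd (proj2_sig a) (proj2_sig b)) as [h|h].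
    + right; right. split; [exact h|exact ne].
    + left. split; [exact h| intro e; apply ne; symmetry; exact e].
Qed.

Definition twWO n (H : game n) (T : operator H) (hd : defl T) : wellorder :=
  @WellOrder (twT T) (@twlt n H T) (twlt_wf hd) (@twlt_trans n H T) (twlt_total hd).

Definition Fin n (H : game n) (T : operator H) : restriction H := meetS (tower T).

Lemma Fin_tower n (H : game n) (T : operator H) : tower T (Fin T).
Proof. apply tw_meet. auto. Qed.

Lemma Fin_fix n (H : game n) (T : operator H) (hd : defl T) : T (Fin T) = Fin T.
Proof.
  apply rext; [apply hd|]. intros i s hs. apply hs. constructor. apply Fin_tower.
Qed.

Lemma Fin_least n (H : game n) (T : operator H) K : tower T K -> rsub (Fin T) K.
Proof. intros hK i s hs. exact (hs K hK). Qed.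

Definition twf n (H : game n) (T : operator H) (x : twT T) : restriction H :=
  match x with Some a => proj1_sig a | None => Fin T end.

Lemma tw_iteration n (H : game n) (T : operator H) (hd : defl T) :
  @is_iteration n H T (@twWO n H T hd) (@twf n H T).
Proof.
  intros w. split.
  - intros v [hv1 hv2]. destruct v as [[y py]|]; [|contradiction].
    destruct w as [[x px]|]; simpl in *.
    + destruct hv1 as [h1 h2].
      destruct (lemma1 hd (lemma2 hd py) px) as [h|h].
      * exfalso. apply h2. exact (rext h1 h).
      * destruct (classic (T y = x)) as [e|ne]; [symmetry; exact e|].
        exfalso. destruct (classic (T y = y)) as [e2|ne2].
        -- apply h2. exact (FP hd py e2 px h1).
        -- apply hv2. exists (Some (exist _ (T y) (tw_T py))). simpl. split.
           ++ split; [apply hd|exact ne2].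
           ++ split; [exact h| intro e; apply ne; symmetry; exact e].
    +
      have : y = Fin T.
      { apply rext; [|exact (Fin_least py)].
        destruct (classic (y = Fin T)) as [e|ne]; [rewrite e; intros i s q; exact q|].
        exfalso. apply hv2. exists (Some (exist _ (Fin T) (Fin_tower T))). simpl.
        split; [|exact I]. split; [exact (Fin_least py)| intro e; apply ne; symmetry; exact e]. }
      intro e. rewrite e. symmetry. exact (Fin_fix hd).
  - intros hn. destruct w as [[x px]|]; simpl.
    + set L := meetS (fun z => tower T z /\ rsub x z /\ x <> z).
      have hL : tower T L by apply tw_meet; intros K [hK _]; exact hK.
      have xL : rsub x L by intros i s hs K [_ [hK _]]; exact (hK i s hs).
      have eL : x = L.
      { destruct (classic (x = L)) as [e|ne]; [exact e|]. exfalso.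
        destruct (lemma1 hd (lemma2 hd hL) px) as [h|h].
        - apply ne. exact (rext xL h).
        - destruct (classic (T L = x)) as [e|ne2].
          + apply hn. exists (Some (exist _ L hL)). simpl. split.
            * split; [exact xL| intro e'; apply ne; simpl in e'; congruence].
            * intros [[[z pz]|] [hu1 hu2]]; simpl in hu1, hu2; [|contradiction].
              destruct hu1 as [hz1 hz2]. destruct hu2 as [hz3 hz4].
              apply hz2. apply rext; [exact hz1|].
              intros i s hs. apply hs. split; [exact pz|split;[exact hz3|]].
              intro e'; apply hz4; first [exact e' | exact (eq_sym e')].
          + have hTL : T L = L.
            { apply rext; [apply hd|]. intros i s hs. apply hs.
              split; [constructor; exact hL|split; [exact h|]].
              intro e'; apply ne2; rewrite e'; reflexivity. }
            apply ne. apply (FP hd hL hTL px xL). }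
      apply rext.
      * intros i s hs [[z pz]|] hv; simpl in hv |- *; [|contradiction].
        destruct hv as [h1 h2]. exact (h1 i s hs).
      * intros i s hs. rewrite eL. intros K [hK [h1 h2]].
        exact (hs (Some (exist _ K hK)) (conj h1 h2)).
    + apply rext.
      * intros i s hs [[z pz]|] hv; simpl in hv |- *; [|contradiction].
        exact (hs z pz).
      * intros i s hs K hK. exact (hs (Some (exist _ K hK)) I).
Qed.

Lemma tw_outcome n (H : game n) (T : operator H) (hd : defl T) : outcome T (Fin T).
Proof.
  exists (@twWO n H T hd). exists (@twf n H T).
  exists (Some (exist _ (Fin T) (Fin_tower T)) : @twWO n H T hd). exists (None : @twWO n H T hd).
  split; [exact (@tw_iteration n H T hd)|].
  split; [|split; [reflexivity|split; [reflexivity|]]].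
  - split; [exact I|]. intros [[[z pz]|] [h1 h2]]; simpl in h1, h2; [|contradiction].
    destruct h1 as [h1 h3]. apply h3. exact (rext h1 (Fin_least pz)).
  - intros b b1 hb hsucc e.
    destruct b as [[y py]|]; simpl in hb; [|contradiction].
    destruct hb as [hb1 hb2].
    destruct b1 as [[z pz]|].
    + have ez := proj1 (@tw_iteration n H T hd (Some (exist _ z pz))) _ hsucc.
      simpl in ez, e. rewrite ez in e.
      apply hb2. exact (FP hd py e (Fin_tower T) hb1).
    + apply (proj2 hsucc). exists (Some (exist _ (Fin T) (Fin_tower T))). simpl.
      split; [|exact I]. split; [exact hb1|exact hb2].
Qed.
Unset Strict Implicit.

Lemma relax_outcome n (H : game n) (bs : belief_structure H) (hA : propertyA bs)
  (hB : propertyB bs) (R0 : operator H) X :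
  relaxation (obar (LR bs)) R0 -> outcome R0 X -> X = Fin (obar (GR bs)).
Proof.
  intros hrel [W [f [a [a1 [hit [hsucc [e1 [eX _]]]]]]]].
  have hR := hrel W f hit.
  have hInv : forall w, Inv bs (f w).
  { apply (iter_ind (P := fun w => Inv bs (f w)) hit).
    - intros w v hv e IH. rewrite e.
      destruct (hR v) as [c1 [c2 c3]].
      have c2' := c2 (@obar_sub n H (LR bs) (f v)).
      intros i mu s hm hb.
      have hm' := hA _ _ c2' i mu hm.
      have fs := IH v (proj1 hv) i mu s hm' hb.
      apply c1. split; [|exact fs].
      apply (@GR_sub_LR n H bs hA (f v) (f v) (fun _ _ q => q)).
      exists mu; split; assumption.
    - intros w _ e IH. rewrite e. exact (Inv_meet hA IH). }
  have hF : forall w, rsub (Fin (obar (GR bs))) (f w).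
  { apply (iter_ind (P := fun w => rsub (Fin (obar (GR bs))) (f w)) hit).
    - intros w v hv e IH. rewrite e.
      destruct (hR v) as [c1 [c2 c3]].
      intros i s hs. apply c1.
      rewrite -(Fin_fix (@obar_sub n H (GR bs))) in hs.
      destruct hs as [hs1 hs2].
      split; [exact (GR_sub_LR hA (IH v (proj1 hv)) hs1) | exact (IH v (proj1 hv) i s hs2)].
    - intros w _ e IH. rewrite e. intros i s hs v hv. exact (IH v hv i s hs). }
  have hfix : obar (GR bs) (f a) = f a.
  { have ea1 := proj1 (hit a1) a hsucc.
    destruct (hR a) as [_ [_ c3]].
    have e2 : R0 (f a) = f a by rewrite -ea1; exact e1.
    rewrite -(agree_obarLR hB (hInv a)). exact (c3 e2). }
  have hX : forall K, tower (obar (GR bs)) K -> rsub (f a) K.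
  { intros K hK. induction hK as [K' hK' IH | S hS IH].
    - rewrite -hfix. exact (obarGR_mono hA IH).
    - intros i s hs K hK. exact (IH K hK i s hs). }
  rewrite eX. apply rext; [|exact (hF a)].
  intros i s hs K hK. exact (hX K hK i s hs).
Qed.

Theorem mainTheorem7 (n : nat) (H : game n) (bs : belief_structure H)
    (hA : propertyA bs) (hB : propertyB bs) :
  (* (i) *)
  ((forall (W : wellorder) (f g : W -> restriction H),
      is_iteration (obar (GR bs)) f -> is_iteration (obar (LR bs)) g ->
      forall w : W, f w = g w) /\
   (forall X : restriction H,
      outcome (obar (GR bs)) X <-> outcome (obar (LR bs)) X)) /\
  (* (ii) *)
  (order_independent (obar (LR bs)) /\
   (forall (R0 : operator H) (X : restriction H),
      relaxation (obar (LR bs)) R0 -> outcome R0 X ->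
      outcome (obar (GR bs)) X)) /\
  (* (iii) *)
  ((forall (W : wellorder) (f g : W -> restriction H),
      is_iteration (LR bs) f -> is_iteration (obar (LR bs)) g ->
      forall w : W, f w = g w) /\
   (exists X : restriction H, outcome (LR bs) X /\ outcome (obar (LR bs)) X) /\
   (forall X : restriction H,
      outcome (LR bs) X <-> outcome (obar (LR bs)) X)).
Proof.
  have aG := @agree_GR n H bs.
  have aL := agree_obarLR hB.
  have aLR := agree_LR hB.
  have hd : defl (obar (GR bs)) := @obar_sub n H (GR bs).
  split; [split|split; [split|split; [|split]]].
  - intros W f g hf hg. apply (iter_unique hf). exact (iter_transfer hA aL aG hg).
  - intros X; split; [exact (outcome_transfer hA aG aL) | exact (outcome_transfer hA aL aG)].
  - intros R1 R2 X1 X2 h1 h2 o1 o2.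
    rewrite (relax_outcome hA hB h1 o1) (relax_outcome hA hB h2 o2). reflexivity.
  - intros R0 X hr ho. rewrite (relax_outcome hA hB hr ho). exact (tw_outcome hd).
  - intros W f g hf hg. apply (iter_unique (iter_transfer hA aLR aG hf)).
    exact (iter_transfer hA aL aG hg).
  - exists (Fin (obar (GR bs))). split.
    + exact (outcome_transfer hA aG aLR (tw_outcome hd)).
    + exact (outcome_transfer hA aG aL (tw_outcome hd)).
  - intros X; split; [exact (outcome_transfer hA aLR aL) | exact (outcome_transfer hA aL aLR)].
Qed.
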